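(* Let $X$ be a topological space and assume that for each sequence $(\mathcal{U}_n:n\in\mathbb{N})$ of $\omega$-covers of $X$ there are a positive integer $k$ and a sequence $(\mathcal{F}_n:n\in\mathbb{N})$ such that for each $n$, $\mathcal{F}_n\subseteq\mathcal{U}_n$ and $|\mathcal{F}_n|\le k$, and $\bigcup\{\mathcal{F}_n:n\in\mathbb{N}\}$ is an $\omega$-cover of $X$. Then $\textsf{S}_1(\Omega,\Omega)$ holds.
   Context: $\Omega$: the set of $\omega$-covers of $X$, i.e. open covers $\mathcal{U}$ with $X\notin\mathcal{U}$ such that every finite subset of $X$ lies in some member. $\textsf{S}_1(\Omega,\Omega)$: for every sequence $(\mathcal{U}_n)$ of $\omega$-covers there are $U_n\in\mathcal{U}_n$ such that $\{U_n:n\in\mathbb{N}\}$ is an $\omega$-cover. *)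

(* Defs.v *)
From mathcomp Require Import all_boot all_order.
From mathcomp Require Import all_classical topology.
Set Implicit Arguments. Unset Strict Implicit. Unset Printing Implicit Defensive.
Local Open Scope classical_set_scope.

Definition omega_cover (T : topologicalType) (U : set (set T)) : Prop :=
  (forall V, U V -> open V) /\
  ~ U setT /\
  (forall F : set T, finite_set F -> exists2 V, U V & F `<=` V).

Definition at_most_card (T : Type) (A : set (set T)) (k : nat) : Prop :=
  exists s : seq (set T), (size s <= k)%N /\ A = [set nth set0 s i | i in [set i : nat | (i < size s)%N]].

Definition S1_Omega_Omega (T : topologicalType) : Prop :=
  forall U : nat -> set (set T), (forall n, omega_cover (U n)) ->
  exists V : nat -> set T, (forall n, U n (V n)) /\ omega_cover (range V).

(* Main.v *)
Require Import Defs.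
From mathcomp Require Import all_boot all_order.
From mathcomp Require Import all_classical topology.
Local Open Scope classical_set_scope.

Definition nxt (p : nat * nat) : nat * nat :=
  if (p.2 < p.1)%N then (p.1, p.2.+1) else (p.1.+1, 0%N).

Fixpoint dec (i : nat) : nat * nat :=
  match i with 0%N => (0%N, 0%N) | i'.+1 => nxt (dec i') end.

Lemma dec_surj n j : (j <= n)%N -> exists i, dec i = (n, j).
Proof.
elim: n j => [|n IH] j.
  by rewrite leqn0 => /eqP ->; exists 0%N.
elim: j => [|j IHj] Hj.
  have [i Hi] := IH n (leqnn n); exists i.+1; by rewrite /= Hi /nxt /= ltnn.
have [i Hi] := IHj (ltnW Hj); exists i.+1; by rewrite /= Hi /nxt /= Hj.
Qed.

Lemma open_fin_cap (T : topologicalType) (f : nat -> set T) n :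
  (forall l, (l <= n)%N -> open (f l)) -> open [set x | forall l, (l <= n)%N -> f l x].
Proof.
elim: n => [|n IH] H.
  have -> : [set x | forall l, (l <= 0)%N -> f l x] = f 0%N.
    apply/seteqP; split => x /=; first by apply.
    by move=> fx l; rewrite leqn0 => /eqP ->.
  exact: H.
have -> : [set x | forall l, (l <= n.+1)%N -> f l x] =
  [set x | forall l, (l <= n)%N -> f l x] `&` f n.+1.
  apply/seteqP; split => x /=.
    by move=> Hx; split => [l Hl|]; apply: Hx => //; apply: leqW.
  move=> [Hx Hn] l; rewrite leq_eqVlt => /orP[/eqP ->//|]; rewrite ltnS; exact: Hx.
apply: openI; first by apply: IH => l Hl; apply: H; apply: leqW.
exact: H.
Qed.

Theorem corollary3p4 (T : topologicalType) :
  (forall U : nat -> set (set T), (forall n, omega_cover (U n)) ->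
     exists (k : nat) (F : nat -> set (set T)),
       (0 < k)%N /\
       (forall n, F n `<=` U n /\ at_most_card (F n) k) /\
       omega_cover (\bigcup_n F n)) ->
  S1_Omega_Omega T.
Proof.
move=> Hyp U HU.
have dP : forall i, exists V, U i V.
  move=> i; have [_ [_ H]] := HU i.
  have [V UV _] := H set0 (finite_set0 _); by exists V.
have [d Hd] := choice dP.
have [t0 _] : exists t : T, True.
  have [_ [nT _]] := HU 0%N.
  apply: contrapT => Hne; apply: nT.
  suff -> : setT = d 0%N by apply: Hd.
  apply/seteqP; split => x // _; exfalso; apply: Hne; by exists x.
have idxP : forall p : nat * nat, exists i, (p.2 <= p.1)%N -> dec i = p.
  case=> n j /=; case: (leqP j n) => H.
    by have [i Hi] := dec_surj _ _ H; exists i.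
  by exists 0%N.
have [idx0 Hidx0] := choice idxP.
pose idx n j := idx0 (n, j).
have Hidx : forall n j, (j <= n)%N -> dec (idx n j) = (n, j).
  by move=> n j H; apply: (Hidx0 (n, j)).
pose W n := [set G : set T | exists f : nat -> set T,
  (forall l, (l <= n)%N -> U (idx n l) (f l)) /\ G = [set x | forall l, (l <= n)%N -> f l x]].
have WnT : forall n G, W n G -> G <> setT.
  move=> n G [f [Hf ->]] HT.
  have [_ [nT _]] := HU (idx n 0%N).
  apply: nT.
  suff <- : f 0%N = setT by apply: Hf.
  apply/seteqP; split => x // _.
  have : [set x | forall l, (l <= n)%N -> f l x] x by rewrite HT.
  by apply.
have HW : forall n, omega_cover (W n).
  move=> n; split; [|split].
  - move=> G [f [Hf ->]]; apply: open_fin_cap => l Hl.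
    by have [Ho _] := HU (idx n l); apply: Ho; apply: Hf.
  - by move=> H; exact: (WnT n setT H).
  - move=> F Ffin.
    have fP : forall l, exists V, (l <= n)%N -> U (idx n l) V /\ F `<=` V.
      move=> l; have [_ [_ H]] := HU (idx n l).
      have [V UV FV] := H F Ffin; by exists V.
    have [f Hf] := choice fP.
    exists [set x | forall l, (l <= n)%N -> f l x].
      by exists f; split => // l Hl; case: (Hf l Hl).
    by move=> x Fx l Hl; case: (Hf l Hl) => _; apply.
have [k [Fam [k0 [HF Hcov]]]] := Hyp W HW.
have sP : forall n, exists s : seq (set T), (size s <= k)%N /\
    Fam n = [set nth set0 s i | i in [set i : nat | (i < size s)%N]].
  by move=> n; have [_ [s Hs]] := HF n; exists s.
have [s Hs] := choice sP.
have memW : forall n j, (j < size (s n))%N -> W n (nth set0 (s n) j).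
  move=> n j Hj; apply: (proj1 (HF n)).
  by rewrite (proj2 (Hs n)); exists j.
have fP : forall p : nat * nat, exists f : nat -> set T,
    (p.2 < size (s p.1))%N ->
    (forall l, (l <= p.1)%N -> U (idx p.1 l) (f l)) /\
    nth set0 (s p.1) p.2 = [set x | forall l, (l <= p.1)%N -> f l x].
  case=> n j /=; case: (ltnP j (size (s n))) => Hj.
    by have [f Hf] := memW n j Hj; exists f.
  by exists (fun _ => set0) .
have [f0 Hf0] := choice fP.
pose f n j := f0 (n, j).
have xP : forall p : nat * nat, exists x : T,
    (p.2 < size (s p.1))%N -> ~ nth set0 (s p.1) p.2 x.
  case=> n j /=; case: (ltnP j (size (s n))) => Hj.
    have := WnT n _ (memW n j Hj) => NT.
    apply: contrapT => Hne; apply: NT.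
    apply/seteqP; split => y // _; apply: contrapT => ny; apply: Hne.
    by exists y.
  by exists t0 .
have [x0 Hx0] := choice xP.
pose g n j := if (j < size (s n))%N && (j <= n)%N then f n j j else d (idx n j).
have Hg : forall n j, U (idx n j) (g n j).
  move=> n j; rewrite /g; case: ifP => [/andP[H1 H2]|_]; last exact: Hd.
  by have [H _] := Hf0 (n, j) H1; apply: H.
pose V i := if i == idx (dec i).1 (dec i).2 then g (dec i).1 (dec i).2 else d i.
exists V; split.
  move=> i; rewrite /V; case: ifP => [/eqP Hi|_]; last exact: Hd.
  by rewrite [X in U X _]Hi; apply: Hg.
have HV : forall i, U i (V i).
  move=> i; rewrite /V; case: ifP => [/eqP Hi|_]; last exact: Hd.
  by rewrite [X in U X _]Hi; apply: Hg.
split; [|split].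
- move=> Z [i _ <-]; by have [Ho _] := HU i; apply: Ho.
- move=> [i _ Hi]; have [_ [nT _]] := HU i; apply: nT; by rewrite -Hi.
- move=> F Ffin.
  pose F' := F `|` [set x0 (a, b) | a in `I_k & b in `I_k].
  have F'fin : finite_set F'.
    by rewrite /F' finite_setU; split => //; apply: finite_image2.
  have [_ [_ Hc]] := Hcov.
  have [G [n _ FG] F'G] := Hc F' F'fin.
  move: FG; rewrite (proj2 (Hs n)) => -[j /= Hj HG].
  have Hsz := proj1 (Hs n).
  case: (ltnP n k) => Hnk.
    exfalso; apply: (Hx0 (n, j) Hj); rewrite /= HG; apply: F'G; right.
    exists n => //; exists j => //=; exact: leq_trans Hj Hsz.
  have Hjn : (j <= n)%N.
    by apply: ltnW; apply: leq_trans Hnk; apply: leq_trans Hj Hsz.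
  exists (V (idx n j)); first by exists (idx n j).
  have HVe : V (idx n j) = f n j j.
    rewrite /V Hidx //= eqxx /g Hj Hjn //.
  rewrite HVe => y Fy.
  have : G y by apply: F'G; left.
  rewrite -HG (proj2 (Hf0 (n, j) Hj)) /=; by apply.
Qed.
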